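(* Suppose $\mathcal X=\hat{\mathcal X}$, $\Lambda(x,\hat x)\ge0$ for all $x,\hat x$ with equality if and only if $x=\hat x$, and $\Pi(x,z)>0$ for all $x,z$. Let $m=m_n$ with $0\le m_n\le\lfloor n/2\rfloor$ and $m_n=\Theta(n)$. Then for any sequence of $n$-block denoisers $\{\hat{\mathbf X}^n\}_{n\ge1}$ there exists $\mathbf x=(x_1,x_2,\dots)\in\mathcal X^\infty$ such that $$\limsup_{n\to\infty}E\big[L_{\hat{\mathbf X}^n}(x^n,Z^n)-D_{0,m_n}(x^n,Z^n)\big]>0.$$
   Context: Let $\mathcal X,\mathcal Z,\hat{\mathcal X}$ be finite alphabets and $\Pi=\{\Pi(x,z)\}$ a $|\mathcal X|\times|\mathcal Z|$ stochastic matrix (discrete memoryless channel) of full row rank. For deterministic $x^n$, the channel output $Z^n$ has independent components with $\Pr(Z_t=z)=\Pi(x_t,z)$. $\Lambda:\mathcal X\times\hat{\mathcal X}\to[0,\infty)$ is the loss. An $n$-block denoiser is $\hat{\mathbf X}^n=(\hat X_1,\dots,\hat X_n)$ with $\hat X_t:\mathcal Z^n\to\hat{\mathcal X}$, and $L_{\hat{\mathbf X}^n}(x^n,z^n)=\frac1n\sum_{t=1}^n\Lambda(x_t,\hat X_t(z^n))$. Let $\mathcal S$ be the set of all maps $\mathcal Z\to\hat{\mathcal X}$, $\mathcal S^n_{0,m}=\{(s_1,\dots,s_n)\in\mathcal S^n:\sum_{t=2}^n\mathbf 1_{\{s_{t-1}\ne s_t\}}\le m\}$, and $D_{0,m}(x^n,z^n)=\min_{(s_1,\dots,s_n)\in\mathcal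 S^n_{0,m}}\frac1n\sum_{t=1}^n\Lambda(x_t,s_t(z_t))$. *)

(* Defs.v *)
From HB Require Import structures.
From mathcomp Require Import all_boot all_order all_algebra.
From mathcomp Require Import reals.
Set Implicit Arguments. Unset Strict Implicit. Unset Printing Implicit Defensive.
Import Order.TTheory GRing.Theory Num.Theory.
Local Open Scope ring_scope.

Section Defs.
Variables (R : realType) (X Z : finType).

Definition chan_mx (Pi : X -> Z -> R) : 'M[R]_(#|X|, #|Z|) :=
  \matrix_(i < #|X|, j < #|Z|) Pi (enum_val i) (enum_val j).

Definition stochastic (Pi : X -> Z -> R) : Prop :=
  (forall x z, 0 <= Pi x z) /\ (forall x, \sum_(z : Z) Pi x z = 1).

Definition full_row_rank (Pi : X -> Z -> R) : Prop :=
  \rank (chan_mx Pi) = #|X|.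

(* Probability of the output block z^n given deterministic input x (indices 0..n-1
   of x correspond to x_1..x_n). *)
Definition chan_prob (Pi : X -> Z -> R) (x : nat -> X) (n : nat)
  (z : {ffun 'I_n -> Z}) : R :=
  \prod_(t < n) Pi (x t) (z t).

Definition expect (Pi : X -> Z -> R) (x : nat -> X) (n : nat)
  (f : {ffun 'I_n -> Z} -> R) : R :=
  \sum_(z : {ffun 'I_n -> Z}) chan_prob Pi x z * f z.

(* An n-block denoiser: hatX_t : Z^n -> Xhat for t < n (Xhat = X here). *)
Definition denoiser (n : nat) := 'I_n -> {ffun 'I_n -> Z} -> X.

Definition block_loss (Lam : X -> X -> R) (x : nat -> X) (n : nat)
  (dn : denoiser n) (z : {ffun 'I_n -> Z}) : R :=
  n%:R^-1 * \sum_(t < n) Lam (x t) (dn t z).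

Definition nswitches (n : nat) (s : {ffun 'I_n -> {ffun Z -> X}}) : nat :=
  (\sum_(t < n) \sum_(u < n) ((u.+1 == t :> nat) && (s u != s t)))%N.

Definition sw_cost (Lam : X -> X -> R) (x : nat -> X) (n : nat)
  (z : {ffun 'I_n -> Z}) (s : {ffun 'I_n -> {ffun Z -> X}}) : R :=
  n%:R^-1 * \sum_(t < n) Lam (x t) (s t (z t)).

(* D_{0,m}(x^n, z^n): minimum of sw_cost over S^n_{0,m} (a nonempty finite set
   whenever X is nonempty; the fold starts from a member of the set, so it is
   exactly the minimum). *)
Definition D0m (Lam : X -> X -> R) (m : nat) (x : nat -> X) (n : nat)
  (z : {ffun 'I_n -> Z}) : R :=
  match [pick s : {ffun 'I_n -> {ffun Z -> X}} | (nswitches s <= m)%N] with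
  | Some s0 => \big[Num.min/sw_cost Lam x z s0]_(s | (nswitches s <= m)%N)
                  sw_cost Lam x z s
  | None => 0
  end.

End Defs.

(* Main.v *)
Require Import Defs.
From HB Require Import structures.
From mathcomp Require Import all_boot all_order all_algebra.
From mathcomp Require Import reals.
From mathcomp Require Import ring lra.
From Stdlib Require Import IndefiniteDescription.
Import Order.TTheory GRing.Theory Num.Theory.
Set Implicit Arguments. Unset Strict Implicit. Unset Printing Implicit Defensive.

Lemma sum_eq_le1 n c : (\sum_(t < n) (nat_of_ord t == c) <= 1)%N.
Proof.
case: (ltnP c n) => hc.
  rewrite (bigD1 (Ordinal hc)) //= eqxx big1 // => t /eqP ht.
  case: eqP => // e; case: ht; exact: val_inj.
rewrite big1 // => t _; case: eqP => // e.
by move: (ltn_ord t); rewrite e ltnNge hc.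
Qed.

Lemma count_le n M (g : nat -> nat) (P : pred 'I_n) :
  (forall t : 'I_n, P t -> exists2 r, (r < M)%N & nat_of_ord t = g r) ->
  (\sum_(t < n) P t <= M)%N.
Proof.
move=> H.
apply: (@leq_trans (\sum_(t < n) \sum_(r < M) (nat_of_ord t == g r))).
  apply: leq_sum => t _; case Pt: (P t) => //.
  have [r hr e] := H t Pt.
  by rewrite (bigD1 (Ordinal hr)) //= e eqxx.
rewrite exchange_big /=.
apply: (@leq_trans (\sum_(r < M) 1)); last by rewrite sum_nat_const card_ord muln1.
by apply: leq_sum => r _; apply: sum_eq_le1.
Qed.

Local Open Scope ring_scope.

Section R2.
Variables (R : realType) (X Z : finType) (Pi : X -> Z -> R).

Lemma prob_sum1 (x : nat -> X) n : stochastic Pi ->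
  \sum_(z : {ffun 'I_n -> Z}) chan_prob Pi x z = 1.
Proof.
case=> _ h1; rewrite /chan_prob.
rewrite -(bigA_distr_bigA (fun (t : 'I_n) (z : Z) => Pi (x t) z)).
by rewrite big1 // => t _; rewrite h1.
Qed.

Lemma chan_prob_ge0 (x : nat -> X) n (z : {ffun 'I_n -> Z}) :
  stochastic Pi -> 0 <= chan_prob Pi x z.
Proof. by case=> h0 _; apply: prodr_ge0 => t _; apply: h0. Qed.

Lemma chan_ratio (c : R) (x y : nat -> X) n (z : {ffun 'I_n -> Z}) :
  0 <= c -> (forall u v, c <= Pi u v <= 1) ->
  c ^+ #|[pred t : 'I_n | x t != y t]| * chan_prob Pi x z <= chan_prob Pi y z.
Proof.
move=> c0 hc; rewrite /chan_prob -prodr_const big_mkcond /= -big_split /=.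
apply: ler_prod => t _; rewrite inE.
have [h0 h1] := andP (hc (x t) (z t)).
have [h0' h1'] := andP (hc (y t) (z t)).
case: eqP => e /=.
  by rewrite mul1r e (le_trans c0 h0') lexx.
rewrite mulr_ge0 ?(le_trans c0 h0) //=. by rewrite (le_trans _ h0') // ler_piMr.
Qed.
End R2.


Section Blocks.
Variables (X : finType) (a b : X) (B : nat).

Definition get (K0 : nat) (s : {ffun 'I_K0 -> bool}) (k : nat) : bool :=
  if insub k is Some i then s i else false.
Definition beta K0 (b0 : nat -> bool) (s : {ffun 'I_K0 -> bool}) (j : nat) :=
  if (K0 <= j)%N then get s (j - K0) else b0 j.
Definition xb (bt : nat -> bool) (t : nat) : X := if bt (t %/ B)%N then a else b.
Definition flip K0 (i : 'I_K0) (s : {ffun 'I_K0 -> bool}) : {ffun 'I_K0 -> bool} :=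
  [ffun i' => if i' == i then ~~ s i' else s i'].

Lemma get_ord K0 (s : {ffun 'I_K0 -> bool}) (i : 'I_K0) : get s i = s i.
Proof. by rewrite /get valK. Qed.

Lemma flip_inj K0 (i : 'I_K0) : injective (flip i).
Proof.
move=> s1 s2 e; apply/ffunP => i'; have := congr1 (fun f : {ffun 'I_K0 -> bool} => f i') e.
by rewrite !ffunE; case: eqP => _ //; case: (s1 i'); case: (s2 i').
Qed.

Lemma get_flip K0 (i : 'I_K0) s k : get (flip i s) k != get s k -> k = i.
Proof.
rewrite /get; case: insubP => // i' _ E; rewrite ffunE -E.
by case: (i' =P i) => [->|] // _; rewrite eqxx.
Qed.

Lemma beta_flip K0 b0 (i : 'I_K0) s j :
  beta b0 (flip i s) j != beta b0 s j -> j = (K0 + i)%N.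
Proof.
rewrite /beta; case: leqP => h; last by rewrite eqxx.
by move/get_flip => <-; rewrite subnKC.
Qed.

Lemma xb_flip K0 b0 (i : 'I_K0) s t :
  xb (beta b0 (flip i s)) t != xb (beta b0 s) t -> ((t %/ B)%N = K0 + i)%N.
Proof.
move=> h; apply: (beta_flip (b0 := b0) (i := i) (s := s)).
apply: contraNneq h => e; by rewrite /xb e; apply/eqP.
Qed.

Lemma card_flip K0 b0 (i : 'I_K0) s n : (0 < B)%N ->
  (#|[pred t : 'I_n | xb (beta b0 s) t != xb (beta b0 (flip i s)) t]| <= B)%N.
Proof.
move=> B0; rewrite -sum1_card big_mkcond /=.
apply: (@leq_trans (\sum_(t < n) ((xb (beta b0 s) t != xb (beta b0 (flip i s)) t) : nat))).
  by apply: leq_sum => t _; rewrite inE; case: ifP.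
apply: (count_le (g := fun r => ((K0 + i) * B + r)%N)) => t ht.
exists (t %% B)%N; first by rewrite ltn_mod.
rewrite {1}(divn_eq t B); congr (_ * _ + _)%N.
by apply: (xb_flip (b0 := b0) (s := s)); rewrite eq_sym.
Qed.

Lemma xb_at K0 b0 (s : {ffun 'I_K0 -> bool}) (i : 'I_K0) t : ((t %/ B)%N = K0 + i)%N ->
  xb (beta b0 s) t = if s i then a else b.
Proof.
by move=> h; rewrite /xb h /beta leq_addr addKn get_ord.
Qed.

End Blocks.


Section Pair.
Variables (R : realType) (X Z : finType) (Pi : X -> Z -> R) (Lam : X -> X -> R).
Variables (a b : X) (B : nat) (c lam : R).
Hypotheses (hst : stochastic Pi) (c0 : 0 <= c) (c1 : c <= 1)
  (hc : forall u v, c <= Pi u v <= 1)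
  (hlam : forall d, lam <= Lam a d + Lam b d) (Lam0 : forall x y, 0 <= Lam x y)
  (B0 : (0 < B)%N).

Definition ee n (d : denoiser X Z n) (t : 'I_n) (x : nat -> X) :=
  expect Pi x (fun z => Lam (x t) (d t z)).

Lemma pair_bound K0 b0 (s : {ffun 'I_K0 -> bool}) (i : 'I_K0) n
  (d : denoiser X Z n) (t : 'I_n) : (t %/ B)%N = (K0 + i)%N ->
  c ^+ B * lam <= ee d t (xb a b B (beta b0 s)) + ee d t (xb a b B (beta b0 (flip i s))).
Proof.
move=> ht.
set x := xb a b B (beta b0 s); set y := xb a b B (beta b0 (flip i s)).
have hx : x t = if s i then a else b by rewrite /x (xb_at _ _ _ _ ht).
have hy : y t = if ~~ s i then a else b by rewrite /y (xb_at _ _ _ _ ht) ffunE eqxx.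
have cB1 : c ^+ B <= 1 by apply: exprn_ile1.
have cB0 : 0 <= c ^+ B by apply: exprn_ge0.
have hrho z : c ^+ B * chan_prob Pi x z <= chan_prob Pi y z.
  apply: le_trans (chan_ratio _ _ _ c0 hc).
  apply: ler_wpM2r; first exact: chan_prob_ge0.
  apply: ler_wiXn2l => //; exact: card_flip.
rewrite /ee /expect -big_split /=.
apply: (@le_trans _ _ (\sum_(z : {ffun 'I_n -> Z}) c ^+ B * lam * chan_prob Pi x z)).
  by rewrite -mulr_sumr prob_sum1 // mulr1.
apply: ler_sum => z _.
have P0 := chan_prob_ge0 x z hst.
have hl : lam <= Lam (x t) (d t z) + Lam (y t) (d t z).
  by rewrite hx hy; case: (s i) => /=; [|rewrite addrC]; apply: hlam.
apply: (@le_trans _ _ (c ^+ B * chan_prob Pi x z * (Lam (x t) (d t z) + Lam (y t) (d t z)))).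
  by rewrite mulrAC; apply: ler_wpM2l => //; rewrite mulr_ge0.
rewrite mulrDr; apply: lerD; rewrite [_ * Lam _ _]mulrC; rewrite [X in X <= _]mulrC; apply: ler_wpM2r => //.
  by rewrite ler_piMl.
Qed.

Lemma avg_bound K0 b0 n (d : denoiser X Z n) (t : 'I_n) (i : 'I_K0) :
  (t %/ B)%N = (K0 + i)%N ->
  (#|{ffun 'I_K0 -> bool}|%:R * (c ^+ B * lam / 2)) <=
    \sum_(s : {ffun 'I_K0 -> bool}) ee d t (xb a b B (beta b0 s)).
Proof.
move=> ht.
set S := \sum_(s : {ffun 'I_K0 -> bool}) _.
have hS : S = \sum_(s : {ffun 'I_K0 -> bool}) ee d t (xb a b B (beta b0 (flip i s))).
  by rewrite /S (reindex_inj (@flip_inj _ i)).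
have h2 : #|{ffun 'I_K0 -> bool}|%:R * (c ^+ B * lam) <= S + S.
  rewrite {2}hS -big_split /= mulr_natl -sumr_const.
  by apply: ler_sum => s _; apply: pair_bound.
rewrite mulrA ler_pdivrMr // mulr2n mulrDr mulr1.
by [].
Qed.
End Pair.


Section Stage.
Variables (R : realType) (X Z : finType) (Pi : X -> Z -> R) (Lam : X -> X -> R).
Variables (a b : X) (B : nat) (c lam : R).
Hypotheses (hst : stochastic Pi) (c0 : 0 <= c) (c1 : c <= 1)
  (hc : forall u v, c <= Pi u v <= 1)
  (hlam : forall d, lam <= Lam a d + Lam b d) (Lam0 : forall x y, 0 <= Lam x y)
  (B0 : (0 < B)%N).

Lemma ee_ge0 n (d : denoiser X Z n) t x : 0 <= ee Pi Lam d t x.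
Proof.
by apply: sumr_ge0 => z _; apply: mulr_ge0; [exact: chan_prob_ge0|exact: Lam0].
Qed.

Lemma stage_sum K0 b0 (d : denoiser X Z (K0 * B + K0 * B)) :
  exists s : {ffun 'I_K0 -> bool},
    (K0 * B)%:R * (c ^+ B * lam / 2) <=
    \sum_(t < K0 * B + K0 * B) ee Pi Lam d t (xb a b B (beta b0 s)).
Proof.
pose F (s : {ffun 'I_K0 -> bool}) :=
  \sum_(u < K0 * B) ee Pi Lam d (rshift (K0 * B) u) (xb a b B (beta b0 s)).
pose s0 : {ffun 'I_K0 -> bool} := [ffun => false].
have [s _ Hs] := @arg_maxP _ _ _ s0 predT F isT.
exists s.
rewrite big_split_ord /=.
apply: (@le_trans _ _ (F s)); last first.
  rewrite -[X in X <= _]add0r; apply: lerD; last exact: lexx.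
  by apply: sumr_ge0 => u _; apply: ee_ge0.
have cpos : (0 < #|{ffun 'I_K0 -> bool}|)%N by rewrite card_ffun card_bool expn_gt0.
set C' := c ^+ B * lam / 2.
have H1 : #|{ffun 'I_K0 -> bool}|%:R * ((K0 * B)%:R * C') <=
          #|{ffun 'I_K0 -> bool}|%:R * F s.
  apply: (@le_trans _ _ (\sum_(s' : {ffun 'I_K0 -> bool}) F s')); last first.
    rewrite mulr_natl -sumr_const; apply: ler_sum => s' _; exact: Hs.
  rewrite /F exchange_big /=.
  apply: (@le_trans _ _ (\sum_(u < K0 * B) (#|{ffun 'I_K0 -> bool}|%:R * C'))).
    by rewrite sumr_const card_ord -[X in _ <= X]mulr_natl mulrCA.
  apply: ler_sum => u _.
  have hu : (u %/ B < K0)%N by rewrite ltn_divLR.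
  apply: (@avg_bound _ _ _ _ _ _ _ _ _ _ hst c0 c1 hc hlam Lam0 B0 _ _ _ _ _ (Ordinal hu)).
  by rewrite /= divnMDl.
by rewrite ler_pM2l ?ltr0n in H1.
Qed.
End Stage.


Section Misc.
Variables (R : realType) (X Z : finType) (Pi : X -> Z -> R) (Lam : X -> X -> R).

Definition sx n (x : nat -> X) : {ffun 'I_n -> {ffun Z -> X}} := [ffun t : 'I_n => [ffun _ : Z => x t]].

Lemma D0m_le0 (mm : nat) (x : nat -> X) n (z : {ffun 'I_n -> Z}) :
  (forall u, Lam u u = 0) -> (nswitches (sx n x) <= mm)%N -> D0m Lam mm x z <= 0.
Proof.
move=> hL hs; rewrite /D0m; case: pickP => [s0 _|_] //=.
apply: le_trans (bigmin_le_cond (sw_cost Lam x z s0) (sw_cost Lam x z) hs) _.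
rewrite /sw_cost big1 ?mulr0 // => t _.
by rewrite /sx !ffunE hL.
Qed.

Lemma nsw_bound (a b : X) B K0 (bt : nat -> bool) : (0 < B)%N ->
  (nswitches (sx (K0 * B + K0 * B) (xb a b B bt)) <= K0 + K0)%N.
Proof.
move=> B0; rewrite /nswitches.
apply: (@leq_trans (\sum_(t < K0 * B + K0 * B) (B %| t)%N)).
  apply: leq_sum => t _.
  case Bt: (B %| t)%N.
    apply: (count_le (g := fun _ => t.-1)) => u /andP [/eqP hu _].
    by exists 0%N => //; rewrite -hu.
  rewrite leqn0 sum_nat_eq0; apply/forallP => u; apply/implyP => _.
  case: (u.+1 =P t) => //= hu.
  suff -> : sx (K0 * B + K0 * B) (xb a b B bt) u = sx (K0 * B + K0 * B) (xb a b B bt) t.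
    by rewrite eqxx.
  apply/ffunP => v; rewrite !ffunE /xb -hu (divnS _ B0) hu Bt add0n.
  by [].
apply: (count_le (g := fun r => r * B)%N) => t Bt.
exists (t %/ B)%N; first by rewrite ltn_divLR // mulnDl.
by rewrite divnK.
Qed.

Lemma expect_lb (x : nat -> X) n (d : denoiser X Z n) (mm : nat) :
  stochastic Pi -> (forall z : {ffun 'I_n -> Z}, D0m Lam mm x z <= 0) ->
  n%:R^-1 * \sum_(t < n) ee Pi Lam d t x <=
  expect Pi x (fun z => block_loss Lam x d z - D0m Lam mm x z).
Proof.
move=> hst hD; rewrite /ee /expect /block_loss.
rewrite exchange_big /= mulr_sumr; apply: ler_sum => z _.
rewrite -mulr_sumr mulrCA; apply: ler_wpM2l; first exact: chan_prob_ge0.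
by rewrite mulr_sumr lerDl oppr_ge0.
Qed.

Lemma expr_ext (x y : nat -> X) n (d : denoiser X Z n) (mm : nat) :
  (forall t, (t < n)%N -> x t = y t) ->
  expect Pi x (fun z => block_loss Lam x d z - D0m Lam mm x z) =
  expect Pi y (fun z => block_loss Lam y d z - D0m Lam mm y z).
Proof.
move=> h.
have hc (z : {ffun 'I_n -> Z}) : chan_prob Pi x z = chan_prob Pi y z.
  by apply: eq_bigr => t _; rewrite (h _ (ltn_ord t)).
have hb (z : {ffun 'I_n -> Z}) : block_loss Lam x d z = block_loss Lam y d z.
  by congr (_ * _); apply: eq_bigr => t _; rewrite (h _ (ltn_ord t)).
have hs (z : {ffun 'I_n -> Z}) s : sw_cost Lam x z s = sw_cost Lam y z s.
  by congr (_ * _); apply: eq_bigr => t _; rewrite (h _ (ltn_ord t)).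
have hd (z : {ffun 'I_n -> Z}) : D0m Lam mm x z = D0m Lam mm y z.
  rewrite /D0m; case: pickP => [s0 _|_] //=.
  by rewrite hs; apply: eq_bigr => s _; rewrite hs.
by apply: eq_bigr => z _; rewrite hc hb hd.
Qed.
End Misc.

Unset Implicit Arguments. Set Strict Implicit. Set Printing Implicit Defensive.

Theorem theorem5 (R : realType) (X Z : finType) (Pi : X -> Z -> R)
  (Lam : X -> X -> R) (m : nat -> nat) :
  (1 < #|X|)%N ->
  stochastic Pi -> full_row_rank Pi ->
  (forall x z, 0 < Pi x z) ->
  (forall x xh, 0 <= Lam x xh) ->
  (forall x xh, Lam x xh = 0 <-> x = xh) ->
  (forall n, (m n <= n./2)%N) ->
  (exists c1 c2 : R, exists N : nat, 0 < c1 /\ 0 < c2 /\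
     forall n, (N <= n)%N -> c1 * n%:R <= (m n)%:R /\ (m n)%:R <= c2 * n%:R) ->
  forall den : forall n, denoiser X Z n,
  exists x : nat -> X,
    exists eps : R, 0 < eps /\
      forall N : nat, exists n : nat, (N <= n)%N /\
        eps < @expect R X Z Pi x n (fun z => block_loss Lam x (den n) z - D0m Lam (m n) x z).
Proof.
move=> hX hst _ hpos Lam0 hLam _ [c1' [c2 [N0 [c1pos [_ hm]]]]] den.
have [a [b [_ _ hab]]] := card_gt1P hX.
have hPi1 : forall u v, Pi u v <= 1.
  move=> u v; have [h0 h1] := hst.
  apply: (@le_trans _ _ (\sum_z Pi u z)); last by rewrite h1.
  rewrite (bigD1 v) //= lerDl; exact: sumr_ge0.
pose c := \big[Num.min/1]_(p : X * Z) Pi p.1 p.2.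
have cpos : 0 < c.
  rewrite /c; apply: (big_ind (fun w => 0 < w)) => //.
  by move=> x y hx hy; rewrite lt_min hx hy.
have c0 : 0 <= c by apply: ltW.
have c1 : c <= 1 by apply: bigmin_le_id.
have hc u v : c <= Pi u v <= 1.
  by rewrite hPi1 andbT; apply: (bigmin_le 1 (u, v) (fun p : X * Z => Pi p.1 p.2)).
have [ds _ Hds] := @arg_minP _ _ _ a predT (fun d => Lam a d + Lam b d) isT.
pose lam := Lam a ds + Lam b ds.
have hlam d : lam <= Lam a d + Lam b d by apply: Hds.
have lampos : 0 < lam.
  rewrite lt_def addr_ge0 // andbT; apply/negP; rewrite paddr_eq0 //.
  case/andP => /eqP /hLam ha /eqP /hLam hb.
  by move: hab; rewrite ha hb eqxx.
have hLu u : Lam u u = 0 by apply/hLam.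
pose B := (Num.Def.archi_bound (c1'^-1)).+1.
have B0 : (0 < B)%N by [].
have hB : 1 <= c1' * B%:R.
  have h0 : 0 <= c1'^-1 by rewrite invr_ge0 ltW.
  have h := archi_boundP h0.
  apply: ltW; rewrite -ltr_pdivrMl // mulr1.
  by apply: (lt_trans h); rewrite ltr_nat.
pose K k := (2 ^ k * N0.+1)%N.
pose n k := (K k * B + K k * B)%N.
pose C' := c ^+ B * lam / 2.
have C'pos : 0 < C' by rewrite divr_gt0 // mulr_gt0 // exprn_gt0.
pose eps := C' / 4.
pose good k (bt : nat -> bool) := eps < expect Pi (xb a b B bt)
  (fun z => block_loss Lam (xb a b B bt) (den (n k)) z - D0m Lam (m (n k)) (xb a b B bt) z).
have Kpos k : (N0 < K k)%N by rewrite /K leq_pmull // expn_gt0.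
have step k (b0 : nat -> bool) :
    exists bt, (forall j, (j < K k)%N -> bt j = b0 j) /\ good k bt.
  have [s hs] := @stage_sum _ _ _ Pi Lam a b B c lam hst c0 c1 hc hlam Lam0 B0 (K k) b0 (den (n k)).
  exists (beta b0 s); split; first by move=> j hj; rewrite /beta leqNgt hj.
  rewrite /good.
  have hnN : (N0 <= n k)%N.
    apply: (leq_trans (ltnW (Kpos k))); apply: (leq_trans _ (leq_addr _ _)).
    exact: leq_pmulr.
  have hsw : (nswitches (@sx X Z (n k) (xb a b B (beta b0 s))) <= m (n k))%N.
    apply: (leq_trans (@nsw_bound X Z a b B (K k) (beta b0 s) B0)).
    rewrite -(ler_nat R); apply: le_trans (proj1 (hm _ hnN)).
    rewrite /n -mulnDl natrM mulrCA; apply: ler_peMr => //.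
  apply: (lt_le_trans _ (@expect_lb R X Z Pi Lam (xb a b B (beta b0 s)) (n k) (den (n k)) (m (n k)) hst _)); last first.
    by move=> z; apply: D0m_le0 hLu hsw.
  apply: (lt_le_trans _ (ler_wpM2l _ hs)); last by rewrite invr_ge0.
  have q0 : 0 < (K k * B)%:R :> R.
    by rewrite ltr0n muln_gt0 B0 andbT (leq_ltn_trans _ (Kpos k)).
  rewrite /n natrD /eps.
  set q := (K k * B)%:R.
  have -> : (q + q)^-1 * (q * C') = C' / 2.
    by field; apply: lt0r_neq0; apply: addr_gt0; rewrite -natrM.
  lra.
pose f k b0 := sval (constructive_indefinite_description _ (step k b0)).
have hf : forall k b0, (forall j, (j < K k)%N -> f k b0 j = b0 j) /\ good k (f k b0).
  by move=> k b0; exact: (svalP (constructive_indefinite_description _ (step k b0))).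
pose bs := fix bs (k : nat) : nat -> bool :=
  match k with 0 => f 0%N (fun _ => false) | k'.+1 => f k'.+1 (bs k') end.
have hgood : forall k, good k (bs k) by case => [|k]; exact: (proj2 (hf _ _)).
have Kmono : forall k k', (k <= k')%N -> (K k <= K k')%N.
  by move=> k k' h; rewrite /K leq_mul2r; apply/orP; right; apply: leq_pexp2l.
have hagree : forall k d j, (j < K k.+1)%N -> bs (k + d)%N j = bs k j.
  move=> k d j hj; elim: d => [|d IH]; first by rewrite addn0.
  rewrite addnS /= (proj1 (hf _ _)) ?IH //.
  by apply: leq_trans hj _; apply: Kmono; rewrite ltnS leq_addr.
have jlt : forall j, (j < K j.+1)%N.
  move=> j; apply: (leq_trans (ltn_expl j (isT : (1 < 2)%N))).
  apply: (leq_trans (leq_pexp2l _ (leqnSn j))) => //; exact: leq_pmulr.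
pose bt j := bs j j.
have hbt : forall k j, (j < K k.+1)%N -> bt j = bs k j.
  move=> k j hj; rewrite /bt; case: (leqP j k) => hjk.
    by rewrite -(subnKC hjk) hagree.
  by rewrite -{1}(subnKC (ltnW hjk)) hagree.
have KS : forall k, (K k.+1 = K k + K k)%N.
  by move=> k; rewrite /K expnS -mulnA mul2n -addnn.
exists (xb a b B bt), eps; split; first by rewrite /eps divr_gt0.
move=> N; exists (n N); split.
  apply: ltnW; apply: (leq_trans (ltn_expl N (isT : (1 < 2)%N))).
  apply: (leq_trans (leq_pmulr _ (ltn0Sn N0))).
  exact: (leq_trans (leq_pmulr _ B0) (leq_addr _ _)).
rewrite (@expr_ext R X Z Pi Lam (xb a b B bt) (xb a b B (bs N))).
  exact: hgood.
move=> t ht; rewrite /xb (hbt N) //.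
by rewrite KS ltn_divLR // mulnDl.
Qed.
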